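(* Let $N\ge 2$ and let $p,p'$ be two paths of length $N$ with edge matrices $E$ and $E'$. Then the shapes of $p$ and $p'$ are equivalent if and only if $E'$ is obtained from $E$ by a circular shift of the columns, i.e. there is an integer $k$ such that for all $n\in\{0,\dots,N-1\}$, column $n$ of $E'$ equals column $(n+k)\bmod N$ of $E$.
   Context: A path of length $N$ is a vector $p=(p_0,\dots,p_{N-1})$ whose entries are the integers $0,\dots,N-1$ in some order; indices are cyclic, $p_N=p_0$, $s_{-1}=s_{N-1}$; $x\bmod N$ denotes the remainder in $\{0,\dots,N-1\}$. Nodes $0,\dots,N-1$ are placed at equally spaced points clockwise around a circle; the shape of $p$ is the set of chords joining node $p_n$ to node $p_{n+1}$, $n=0,\dots,N-1$. Two shapes are equivalent if some rotation of the plane about the center of the circle maps one onto the other. The path differences are $d_n=p_{n+1}-p_n$, and the steps are $s_n=d_n$ if $|d_n|<N/2$; $s_n=N/2$ if $|d_n|=N/2$; $s_n=d_n-N$ if $d_n>N/2$; $s_n=d_n+N$ if $d_n<-N/2$. The edge matrix $E=(e_{in})\in\mathbb{Z}^{2\times N}$ of $p$: for node $n$ let $k$ be the index with $p_k=n$; take $s_k$ and $-s_{k-1}$, replace each by $0$ if its absolute value equals $N/2$, and let $e_{1n}\le e_{2n}$ be these two integers sorted in nondecreasing order. *)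

(* Defs.v *)
From mathcomp Require Import all_boot all_order all_algebra.
Set Implicit Arguments. Unset Strict Implicit. Unset Printing Implicit Defensive.
Import Order.TTheory GRing.Theory Num.Theory.
Local Open Scope ring_scope.

Definition is_path (N : nat) (p : seq nat) : bool := perm_eq p (iota 0 N).

Definition pe (N : nat) (p : seq nat) (n : nat) : nat := nth 0%N p (n %% N).

Definition pdiff (N : nat) (p : seq nat) (n : nat) : int :=
  (pe N p n.+1)%:Z - (pe N p n)%:Z.

(* steps s_n ; the test |d| = N/2 is written |d|*2 = N *)
Definition step (N : nat) (p : seq nat) (n : nat) : int :=
  let d := pdiff N p n in
  if `|d| *+ 2 < N%:Z then d
  else if `|d| *+ 2 == N%:Z then (N./2)%:Z
  else if 0 < d then d - N%:Z else d + N%:Z.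

Definition zero_half (N : nat) (x : int) : int :=
  if `|x| *+ 2 == N%:Z then 0 else x.

(* column n of the edge matrix: (e_{1n}, e_{2n}) with e_{1n} <= e_{2n};
   k is the index with p_k = n, and k-1 is taken cyclically as k+N-1. *)
Definition edge_col (N : nat) (p : seq nat) (n : nat) : int * int :=
  let k := index n p in
  let a := zero_half N (step N p k) in
  let b := zero_half N (- step N p (k + N.-1)%N) in
  (Num.min a b, Num.max a b).

Definition node_rot (N : nat) (k : int) (a : nat) : nat :=
  absz ((a%:Z + k) %% N%:Z)%Z.

Definition chord (N : nat) (p : seq nat) (a b : nat) : Prop :=
  exists2 n, (n < N)%N &
    ((a == pe N p n) && (b == pe N p n.+1)) ||
    ((b == pe N p n) && (a == pe N p n.+1)).

Definition shape_equiv (N : nat) (p p' : seq nat) : Prop :=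
  exists k : int, forall x y : nat,
    chord N p' x y <->
    exists a b : nat, [/\ chord N p a b, x = node_rot N k a & y = node_rot N k b].

(* Main.v *)
Require Import Defs.
From mathcomp Require Import all_boot all_order all_algebra zify ring.
Import Order.TTheory GRing.Theory Num.Theory.
Local Open Scope ring_scope.
Set Implicit Arguments. Unset Strict Implicit.
Definition nrm N (d:int) : int := if `|d| *+ 2 < N%:Z then d else if `|d| *+ 2 == N%:Z then (N./2)%:Z else if 0 < d then d - N%:Z else d + N%:Z.
Definition G N d := zero_half N (nrm N d).
Lemma Gtr N (d e : int) : (2 <= N)%N -> `|d| < N%:Z -> `|e| < N%:Z -> (d = e \/ d = e + N%:Z \/ d = e - N%:Z) -> G N d = G N e.
Proof. move=> *; rewrite /G /nrm /zero_half; repeat case: ifP; rewrite ?normrN; lia. Qed.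
Lemma Ginj N (d e : int) : (2 <= N)%N -> `|d| < N%:Z -> `|e| < N%:Z -> d != 0 -> e != 0 -> G N d = G N e -> (d = e \/ d = e + N%:Z \/ d = e - N%:Z).
Proof. move=> ? ? ? ? ? H; move: H; rewrite /G /nrm /zero_half; repeat case: ifP; lia. Qed.
Lemma Gneg N d : zero_half N (- nrm N d) = G N (-d).
Proof. rewrite /G /nrm /zero_half; repeat case: ifP; rewrite ?normrN; lia. Qed.
Lemma M N (d e m : int) : `|d| < N%:Z -> `|e| < N%:Z -> d - e = m * N%:Z -> (d = e \/ d = e + N%:Z \/ d = e - N%:Z).
Proof. move=> hd he hm.
have [m2|m2] := lerP 2 m.
  have : 2 * N%:Z <= m * N%:Z by apply: ler_wpM2r.
  lia.
have [m3|m3] := lerP m (-2).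
  have : m * N%:Z <= -2 * N%:Z by apply: ler_wpM2r.
  lia.
have : m = 0 \/ m = 1 \/ m = -1 by lia.
case=> [E|[E|E]]; rewrite E in hm; lia.
Qed.
Lemma path_size N p : is_path N p -> size p = N.
Proof. by move=> h; rewrite (perm_size h) size_iota. Qed.
Lemma path_uniq N p : is_path N p -> uniq p.
Proof. by move=> h; rewrite (perm_uniq h) iota_uniq. Qed.
Lemma path_mem N p x : is_path N p -> (x \in p) = (x < N)%N.
Proof. by move=> h; rewrite (perm_mem h) mem_iota. Qed.
Lemma pe_lt N p i : (0 < N)%N -> is_path N p -> (pe N p i < N)%N.
Proof. move=> N0 h; rewrite -(path_mem _ h) /pe; apply: mem_nth; rewrite (path_size h) ltn_pmod //. Qed.
Lemma idx_lt N p x : is_path N p -> (x < N)%N -> (index x p < N)%N.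
Proof. by move=> h hx; rewrite -[X in (_ < X)%N](path_size h) index_mem (path_mem _ h). Qed.
Lemma pe_idx N p x : is_path N p -> (x < N)%N -> pe N p (index x p) = x.
Proof. move=> h hx; rewrite /pe modn_small ?(idx_lt h hx) // nth_index // (path_mem _ h) //. Qed.
Lemma pe_eq N p i j : (0 < N)%N -> is_path N p -> (pe N p i = pe N p j) <-> (i %% N = j %% N)%N.
Proof.
move=> N0 h; rewrite /pe; split; last by move=> ->.
by move/eqP; rewrite nth_uniq ?(path_uniq h) ?(path_size h) ?ltn_pmod // => /eqP.
Qed.
Lemma pe_idx_eq N p x i : (0 < N)%N -> is_path N p -> (x < N)%N -> pe N p i = x -> index x p = (i %% N)%N.
Proof. move=> N0 h hx <-; rewrite /pe index_uniq ?(path_uniq h) ?(path_size h) ?ltn_pmod //. Qed.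
Lemma modS N i : (1 < N)%N -> (i < N)%N -> ((i.+1 < N)%N /\ (i.+1 %% N)%N = i.+1) \/ (i.+1 = N /\ (i.+1 %% N)%N = 0%N).
Proof.
move=> N1 hi; case: (ltnP i.+1 N) => h; first by left; rewrite modn_small.
right; have e : i.+1 = N by apply/eqP; rewrite eqn_leq h hi.
by rewrite e modnn.
Qed.
Lemma modP N i : (1 < N)%N -> (i < N)%N -> (i = 0%N /\ ((i + N.-1) %% N)%N = N.-1) \/ (0 < i /\ ((i + N.-1) %% N)%N = i.-1)%N.
Proof.
move=> N1 hi; case: i hi => [|i] hi; first by left; rewrite add0n modn_small //; lia.
right; split => //. have -> : (i.+1 + N.-1 = i + N)%N by lia.
by rewrite modnDr modn_small //; lia.
Qed.
Lemma rot_Z N k a : (0 < N)%N -> (node_rot N k a)%:Z = ((a%:Z + k) %% N%:Z)%Z.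
Proof. by move=> N0; rewrite /node_rot gez0_abs // modz_ge0 //; lia. Qed.
Lemma rot_lt N k a : (0 < N)%N -> (node_rot N k a < N)%N.
Proof. move=> N0; rewrite -ltz_nat rot_Z // ltz_pmod //; lia. Qed.
Lemma rot_inv N k a : (0 < N)%N -> (a < N)%N -> node_rot N (-k) (node_rot N k a) = a.
Proof.
move=> N0 aN; apply/eqP; rewrite -eqz_nat rot_Z // rot_Z // modzDml -addrA subrr addr0 modz_small //; apply/eqP; lia.
Qed.
Lemma rot_inv' N k a : (0 < N)%N -> (a < N)%N -> node_rot N k (node_rot N (-k) a) = a.
Proof. by move=> N0 aN; rewrite -{1}(opprK k) rot_inv. Qed.
Lemma rot_G N k a b : (2 <= N)%N -> (a < N)%N -> (b < N)%N ->
  G N ((node_rot N k b)%:Z - (node_rot N k a)%:Z) = G N (b%:Z - a%:Z).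
Proof.
move=> N2 aN bN; have N0 : (0 < N)%N by lia.
have la := rot_lt k a N0; have lb := rot_lt k b N0.
apply: Gtr => //; try lia.
have hM := @M N ((node_rot N k b)%:Z - (node_rot N k a)%:Z) (b%:Z - a%:Z) (divz (a%:Z + k) N%:Z - divz (b%:Z + k) N%:Z). apply: hM; try lia.
rewrite !rot_Z //.
have ea := divz_eq (a%:Z + k) N%:Z; have eb := divz_eq (b%:Z + k) N%:Z.
set qa := ((a%:Z + k) %/ N%:Z)%Z in ea *; set qb := ((b%:Z + k) %/ N%:Z)%Z in eb *.
set ra := ((a%:Z + k) %% N%:Z)%Z in ea *; set rb := ((b%:Z + k) %% N%:Z)%Z in eb *.
have -> : ra = a%:Z + k - qa * N%:Z by rewrite {1}ea; ring.
have -> : rb = b%:Z + k - qb * N%:Z by rewrite {1}eb; ring.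
ring.
Qed.
Lemma G_inj N x y y' : (2 <= N)%N -> (x < N)%N -> (y < N)%N -> (y' < N)%N -> y != x -> y' != x ->
  G N (y%:Z - x%:Z) = G N (y'%:Z - x%:Z) -> y = y'.
Proof. move=> *; have := @Ginj N (y%:Z - x%:Z) (y'%:Z - x%:Z); lia. Qed.
Definition SN N p x := pe N p (index x p).+1.
Definition PN N p x := pe N p (index x p + N.-1).
Lemma SP_facts N p x : (2 <= N)%N -> is_path N p -> (x < N)%N ->
  [/\ (SN N p x < N)%N, (PN N p x < N)%N, SN N p x != x, PN N p x != x & (SN N p x = PN N p x <-> N = 2)].
Proof.
move=> N2 h hx; have N0 : (0 < N)%N by lia.
have ik := idx_lt h hx; have ex := pe_idx h hx.
have m0 : (index x p %% N = index x p)%N by rewrite modn_small.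
have mS := modS N2 ik; have mP := modP N2 ik.
split; rewrite /SN /PN ?pe_lt //.
- apply/eqP; rewrite -{2}ex pe_eq //; lia.
- apply/eqP; rewrite -{2}ex pe_eq //; lia.
rewrite pe_eq //; lia.
Qed.
Lemma edgeE N p x : (2 <= N)%N -> is_path N p -> (x < N)%N ->
  edge_col N p x = (Num.min (G N ((SN N p x)%:Z - x%:Z)) (G N ((PN N p x)%:Z - x%:Z)),
                    Num.max (G N ((SN N p x)%:Z - x%:Z)) (G N ((PN N p x)%:Z - x%:Z))).
Proof.
move=> N2 h hx; have N0 : (0 < N)%N by lia.
have ik := idx_lt h hx; have ex := pe_idx h hx.
have e2 : pe N p (index x p + N.-1).+1 = x.
  rewrite -{2}ex; apply/pe_eq => //.
  have -> : ((index x p + N.-1).+1 = index x p + N)%N by lia.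
  by rewrite modnDr.
rewrite /edge_col /=.
have -> : zero_half N (step N p (index x p)) = G N ((SN N p x)%:Z - x%:Z).
  by rewrite /G /step /nrm /pdiff ex.
have -> : zero_half N (- step N p (index x p + N.-1)) = G N ((PN N p x)%:Z - x%:Z).
  rewrite /step -/(nrm _ _) Gneg /pdiff e2 /PN; congr (G N _); ring.
by [].
Qed.
Lemma chordP N p a b : (2 <= N)%N -> is_path N p ->
  chord N p a b <-> [/\ (a < N)%N, (b < N)%N & (b = SN N p a \/ b = PN N p a)].
Proof.
move=> N2 h; have N0 : (0 < N)%N by lia.
split.
  case=> n nN /orP [/andP [/eqP ea /eqP eb] | /andP [/eqP eb /eqP ea]].
    have aN : (a < N)%N by rewrite ea pe_lt.
    split; rewrite ?eb ?pe_lt //; left.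
    by rewrite /SN (pe_idx_eq N0 h aN (esym ea)) modn_small.
  have aN : (a < N)%N by rewrite ea pe_lt.
  split; rewrite ?eb ?pe_lt //; right.
  rewrite /PN (pe_idx_eq N0 h aN (esym ea)); apply/pe_eq => //.
  have mS := modS N2 nN; have mP := modP N2 (ltn_pmod (n.+1) N0).
  have m0 : (n %% N = n)%N by rewrite modn_small.
  lia.
case=> aN bN [] eb.
  exists (index a p); first exact: idx_lt.
  by rewrite eb /SN pe_idx // !eqxx.
have ik := idx_lt h aN.
exists ((index a p + N.-1) %% N)%N; first by rewrite ltn_pmod.
have mP := modP N2 ik; have mS := modS N2 (ltn_pmod (index a p + N.-1) N0).
have e1 : pe N p ((index a p + N.-1) %% N) = b by rewrite eb /PN; apply/pe_eq; rewrite ?modn_mod.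
have e2 : pe N p ((index a p + N.-1) %% N).+1 = a.
  rewrite -{2}(pe_idx h aN); apply/pe_eq => //; rewrite (modn_small ik); lia.
by rewrite e1 e2 !eqxx orbT.
Qed.
Lemma sortP (a b c d : int) : (Num.min a b, Num.max a b) = (Num.min c d, Num.max c d) <-> (a = c /\ b = d) \/ (a = d /\ b = c).
Proof.
split; last by case=> [[-> ->]|[-> ->]]; rewrite // minC maxC.
case=> e1 e2; move: e1 e2; rewrite /Num.min /Num.max.
case: (ltP a b); case: (ltP c d); lia.
Qed.
Lemma rot_inj N k a b : (0 < N)%N -> (a < N)%N -> (b < N)%N -> node_rot N k a = node_rot N k b -> a = b.
Proof. by move=> N0 aN bN e; rewrite -(rot_inv k N0 aN) e rot_inv. Qed.
Lemma ms (s q A B : nat) : (s = A \/ s = B) -> (q = A \/ q = B) -> (A = s \/ A = q) -> (B = s \/ B = q) ->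
  (s = q <-> A = B) -> (s = A /\ q = B) \/ (s = B /\ q = A).
Proof. lia. Qed.

Theorem mainTheorem5 (N : nat) (p p' : seq nat) :
  (2 <= N)%N -> is_path N p -> is_path N p' ->
  (shape_equiv N p p' <->
   exists k : int, forall n : nat, (n < N)%N ->
     edge_col N p' n = edge_col N p (node_rot N k n)).
Proof.
move=> N2 h h'; have N0 : (0 < N)%N by lia.
split.
  case=> k hk; exists (-k) => n nN.
  set m := node_rot N (-k) n.
  have mN : (m < N)%N by apply: rot_lt.
  have nm : node_rot N k m = n by rewrite rot_inv'.
  have [Sl Pl Sn Pn SP] := SP_facts N2 h mN.
  have [Sl' Pl' Sn' Pn' SP'] := SP_facts N2 h' nN.
  set A := node_rot N k (SN N p m); set B := node_rot N k (PN N p m).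
  have H1 : forall y, chord N p' n y -> y = A \/ y = B.
    move=> y /hk [a [b [/(chordP _ _ N2 h) [aN bN hb] ea eb]]].
    have am : a = m by rewrite /m ea rot_inv.
    by rewrite eb; rewrite am in hb; case: hb => ->; [left|right].
  have H2 : forall b, chord N p m b -> node_rot N k b = SN N p' n \/ node_rot N k b = PN N p' n.
    move=> b hb; have : chord N p' n (node_rot N k b).
      by apply/hk; exists m, b; split.
    by case/(chordP _ _ N2 h') => _ _ [] ->; [left|right].
  have hs := H1 _ (proj2 (chordP _ _ N2 h') (And3 nN Sl' (or_introl erefl))).
  have hq := H1 _ (proj2 (chordP _ _ N2 h') (And3 nN Pl' (or_intror erefl))).
  have hA := H2 _ (proj2 (chordP _ _ N2 h) (And3 mN Sl (or_introl erefl))).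
  have hB := H2 _ (proj2 (chordP _ _ N2 h) (And3 mN Pl (or_intror erefl))).
  have eAB : SN N p' n = PN N p' n <-> A = B.
    rewrite SP'; split.
      by move/SP; rewrite /A /B => ->.
    by move/(rot_inj N0 Sl Pl)/SP.
  rewrite (edgeE N2 h' nN) (edgeE N2 h mN); apply/sortP.
  rewrite -(rot_G k N2 mN Sl) -(rot_G k N2 mN Pl) nm -/A -/B.
  case: (ms hs hq hA hB eAB) => [[-> ->]|[-> ->]]; [left|right]; split=> //.
case=> k hk; exists (-k).
have key : forall n, (n < N)%N ->
  let m := node_rot N k n in
  (SN N p' n = node_rot N (-k) (SN N p m) /\ PN N p' n = node_rot N (-k) (PN N p m)) \/
  (SN N p' n = node_rot N (-k) (PN N p m) /\ PN N p' n = node_rot N (-k) (SN N p m)).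
  move=> n nN m.
  have mN : (m < N)%N by apply: rot_lt.
  have nm : node_rot N (-k) m = n by rewrite rot_inv.
  have [Sl Pl Sn Pn SP] := SP_facts N2 h mN.
  have [Sl' Pl' Sn' Pn' SP'] := SP_facts N2 h' nN.
  have := hk n nN; rewrite (edgeE N2 h' nN) (edgeE N2 h mN) => /sortP.
  rewrite -(rot_G (-k) N2 mN Sl) -(rot_G (-k) N2 mN Pl) nm.
  have ne : forall z, (z < N)%N -> z != m -> node_rot N (-k) z != n.
    move=> z zN zm; apply/eqP => e; move/eqP: zm; apply; apply: (rot_inj (k:=-k) N0 zN mN); by rewrite e nm.
  have lS := rot_lt (-k) (SN N p m) N0; have lP := rot_lt (-k) (PN N p m) N0.
  have nS := ne _ Sl Sn; have nP := ne _ Pl Pn.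
  case=> [[e1 e2]|[e1 e2]]; [left|right]; split; apply: (G_inj N2 nN) => //.
move=> x y; split.
  case/(chordP _ _ N2 h') => xN yN hy.
  exists (node_rot N k x).
  have mN : (node_rot N k x < N)%N by apply: rot_lt.
  have [Sl Pl _ _ _] := SP_facts N2 h mN.
  have := key x xN => /=.
  case=> [[e1 e2]|[e1 e2]]; case: hy => ->; rewrite ?e1 ?e2.
  - by eexists; split; last reflexivity; [apply/(chordP _ _ N2 h); split; [|exact Sl|left] | rewrite rot_inv].
  - by eexists; split; last reflexivity; [apply/(chordP _ _ N2 h); split; [|exact Pl|right] | rewrite rot_inv].
  - by eexists; split; last reflexivity; [apply/(chordP _ _ N2 h); split; [|exact Pl|right] | rewrite rot_inv].
  - by eexists; split; last reflexivity; [apply/(chordP _ _ N2 h); split; [|exact Sl|left] | rewrite rot_inv].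
case=> a [b [/(chordP _ _ N2 h) [aN bN hb] -> ->]].
have xN : (node_rot N (-k) a < N)%N by apply: rot_lt.
apply/(chordP _ _ N2 h'); split => //; first by apply: rot_lt.
have := key _ xN => /=; rewrite rot_inv' //.
by case=> [[-> ->]|[-> ->]]; case: hb => ->; auto.
Qed.
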